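(* Consider a charging station with a finite set $\mathcal{V}$ of electric vehicles (EVs) over discrete time slots $t\in\{1,\dots,T\}$, with the per-EV data and the set $\mathcal{F}_c$ described in the context. Let $(\{\hat p_{d,t}\}_t,\{\check p_{d,t}\}_t)$ be the upper and lower aggregate power trajectories obtained from problem P1 (in particular they belong to $\mathcal{F}_c$, together with some individual trajectories $\hat p^c_{v,t},\hat e_{v,t},\check p^c_{v,t},\check e_{v,t}$ witnessing membership). Then for every aggregate EV charging power trajectory $\{p_{d,t}\}_{t}$ satisfying $\check p_{d,t}\le p_{d,t}\le \hat p_{d,t}$ for all $t$, there always exists a disaggregate, feasible charging strategy for the individual EVs, i.e. individual charging powers $p^c_{v,t}$ and energy levels $e_{v,t}$ such that: $p_{d,t}=\sum_{v\in\mathcal{V}}p^c_{v,t}$ for all $t$; $0\le p^c_{v,t}\le \bar p_v$ for all $v$ and $t\in[t_v^a,t_v^d]$; $e_{v,t+1}=e_{v,t}+\eta_c p^c_{v,t}\Delta t$ for all $v$ and $t\neq T$; $e_{v,t_v^a}=e_v^a$ and $e_{v,t_v^d}\ge e_v^d$ for all $v$; $\underline e_v\le e_{v,t}\le \bar e_v$ for all $v,t$; and $p^c_{v,t}=0$ for all $v$ and $t\notin[t_v^a,t_v^d]$.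
   Context: Each EV $v\in\mathcal{V}$ has arrival time slot $t_v^a$, departure time slot $t_v^d$, initial energy $e_v^a$ at $t_v^a$, required energy $e_v^d$ at departure, maximum charging power $\bar p_v\ge 0$, energy bounds $\underline e_v\le \bar e_v$; $\eta_c>0$ is the charging efficiency and $\Delta t>0$ the slot length. The set $\mathcal{F}_c$ consists of all trajectories $\{\hat p_{d,t},\check p_{d,t}\}_t$ for which there exist $\hat p^c_{v,t},\hat e_{v,t},\check p^c_{v,t},\check e_{v,t}$ with: $\hat p_{d,t}=\sum_{v}\hat p^c_{v,t}$; $0\le\hat p^c_{v,t}\le\bar p_v$ for $t\in[t_v^a,t_v^d]$; $\hat e_{v,t+1}=\hat e_{v,t}+\eta_c\hat p^c_{v,t}\Delta t$ for $t\ne T$; $\hat e_{v,t_v^a}=e_v^a$, $\hat e_{v,t_v^d}\ge e_v^d$; $\underline e_v\le\hat e_{v,t}\le\bar e_v$; the identical constraints for the checked quantities $\check p_{d,t},\check p^c_{v,t},\check e_{v,t}$; $\check p_{d,t}\le\hat p_{d,t}$ for all $t$; and $\hat p^c_{v,t}=\check p^c_{v,t}=0$ for $t\notin[t_v^a,t_v^d]$. Problem P1 maximizes the long-run time-average expected value $\lim_{T\to\infty}\frac1T\sum_{t=1}^T\mathbb{E}[(\pi^e_t+\pi^c_t\rho_t)(\hat p_{d,t}-\check p_{d,t})]$ over $\mathcal{F}_c$, where $\pi^e_t$ is the electricity price, $\pi^c_t$ the carbon price and $\rho_t$ the grid carbon intensity at time $t$. *)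

(* Defs.v *)
From HB Require Import structures.
From mathcomp Require Import all_boot all_order all_algebra.
Set Implicit Arguments. Unset Strict Implicit. Unset Printing Implicit Defensive.
Import Order.TTheory GRing.Theory Num.Theory.
Local Open Scope ring_scope.

(* Per-EV data of the charging station. Time slots are natural numbers 1..T. *)
Record EVdata (R : realFieldType) (V : finType) := {
  t_arr : V -> nat;
  t_dep : V -> nat;
  e_arr : V -> R;
  e_dep : V -> R;
  p_max : V -> R;
  e_min : V -> R;
  e_max : V -> R
}.

Definition EVdata_ok (R : realFieldType) (V : finType) (T : nat)
    (D : EVdata R V) (eta_c dt : R) : Prop :=
  0 < eta_c /\ 0 < dt /\
  (forall v, 0 <= p_max D v) /\
  (forall v, e_min D v <= e_max D v) /\
  (forall v, (1 <= t_arr D v)%N /\ (t_arr D v <= t_dep D v)%N /\ (t_dep D v <= T)%N).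

Definition disagg_feasible (R : realFieldType) (V : finType) (T : nat)
    (D : EVdata R V) (eta_c dt : R)
    (P : nat -> R) (pc e : V -> nat -> R) : Prop :=
  (forall t, (1 <= t <= T)%N -> P t = \sum_(v : V) pc v t) /\
  (forall v t, (1 <= t <= T)%N -> (t_arr D v <= t <= t_dep D v)%N ->
      0 <= pc v t /\ pc v t <= p_max D v) /\
  (forall v t, (1 <= t)%N -> (t < T)%N ->
      e v t.+1 = e v t + eta_c * pc v t * dt) /\
  (forall v, e v (t_arr D v) = e_arr D v) /\
  (forall v, e_dep D v <= e v (t_dep D v)) /\
  (forall v t, (1 <= t <= T)%N -> e_min D v <= e v t /\ e v t <= e_max D v) /\
  (forall v t, (1 <= t <= T)%N -> ~~ (t_arr D v <= t <= t_dep D v)%N ->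
      pc v t = 0).

Definition in_Fc (R : realFieldType) (V : finType) (T : nat)
    (D : EVdata R V) (eta_c dt : R) (phat pcheck : nat -> R) : Prop :=
  (exists hpc he, disagg_feasible T D eta_c dt phat hpc he) /\
  (exists cpc ce, disagg_feasible T D eta_c dt pcheck cpc ce) /\
  (forall t, (1 <= t <= T)%N -> pcheck t <= phat t).

(* Main.v *)
Require Import Defs.
From HB Require Import structures.
From mathcomp Require Import all_boot all_order all_algebra.
From mathcomp Require Import ring lra zify.
Import Order.TTheory GRing.Theory Num.Theory.
Set Implicit Arguments. Unset Strict Implicit. Unset Printing Implicit Defensive.
Local Open Scope ring_scope.

Definition netf (R : realFieldType) (N E : finType) (tl hd : E -> N) (g : E -> R) (y : N) : R :=
  \sum_(e : E) (((hd e == y)%:R - (tl e == y)%:R) * g e).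

Lemma sum_ind (R : realFieldType) (E : finType) (P : pred E) (g : E -> R) :
  \sum_(e : E) (P e)%:R * g e = \sum_(e | P e) g e.
Proof. by rewrite [RHS]big_mkcond; apply: eq_bigr => e _; case: (P e); rewrite ?mul1r ?mul0r. Qed.

Lemma netf_eq_loops (R : realFieldType) (N E : finType) (tl hd : E -> N) (g1 g2 : E -> R) y :
  (forall e, tl e != hd e -> g1 e = g2 e) -> netf tl hd g1 y = netf tl hd g2 y.
Proof.
move=> H; apply: eq_bigr => e _.
have [h|h] := eqVneq (tl e) (hd e); last by rewrite H.
by rewrite h subrr !mul0r.
Qed.

Lemma circ_base (R : realFieldType) (N E : finType) (s : N) (tl hd : E -> N) (f d : E -> R) :
  (forall e, 0 <= f e) ->
  (forall e, tl e = s -> 0 <= d e <= f e) ->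
  (forall e, f e != 0 -> (tl e == s) && (hd e == s)) ->
  exists W : E -> R, (forall e, 0 <= W e <= f e) /\ (forall e, tl e = s -> W e = d e) /\
     (forall y, y != s -> netf tl hd W y = 0).
Proof.
move=> f0 db sup; exists (fun e => if tl e == s then d e else 0); split; [|split].
- move=> e; case: eqP => [/db //|_]; by rewrite lexx f0.
- by move=> e ->; rewrite eqxx.
- move=> y ys; apply: big1 => e _.
  case: (eqVneq (tl e) s) => [Hs|]; last by rewrite mulr0.
  have [->|dnz] := eqVneq (d e) 0; first by rewrite mulr0.
  have fnz : f e != 0.
    apply/eqP => fz; move: (db e Hs); rewrite fz => /andP[h1 h2].
    by move: dnz; rewrite (@le_anti _ _ (d e) 0) ?eqxx // h1 h2.
  move: (sup e fnz) => /andP[/eqP -> /eqP ->].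
  by rewrite eq_sym (negbTE ys) subrr mul0r.
Qed.

Lemma circ_step (R : realFieldType) (N E : finType) (s x : N) (tl hd : E -> N) (f d : E -> R) (A : {set N}) :
  x != s ->
  (forall e, 0 <= f e) ->
  (forall y, y != s -> netf tl hd f y = 0) ->
  (forall e, tl e = s -> 0 <= d e <= f e) ->
  (forall e, f e != 0 -> (tl e == s) || (tl e \in A)) ->
  (forall e, f e != 0 -> (hd e == s) || (hd e \in A)) ->
  (forall (E' : finType) (tl' hd' : E' -> N) (f' d' : E' -> R),
     (forall e, 0 <= f' e) -> (forall y, y != s -> netf tl' hd' f' y = 0) ->
     (forall e, tl' e = s -> 0 <= d' e <= f' e) ->
     (forall e, f' e != 0 -> (tl' e == s) || (tl' e \in A :\ x)) ->
     (forall e, f' e != 0 -> (hd' e == s) || (hd' e \in A :\ x)) ->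
     exists W : E' -> R, (forall e, 0 <= W e <= f' e) /\ (forall e, tl' e = s -> W e = d' e) /\
        (forall y, y != s -> netf tl' hd' W y = 0)) ->
  exists W : E -> R, (forall e, 0 <= W e <= f e) /\ (forall e, tl e = s -> W e = d e) /\
        (forall y, y != s -> netf tl hd W y = 0).
Proof.
move=> xs f0 cons db stl shd IH.
pose inE e := (hd e == x) && (tl e != x).
pose outE e := (tl e == x) && (hd e != x).
pose incx e := (tl e == x) || (hd e == x).
pose F := \sum_(e | inE e) f e.
have F0 : 0 <= F by apply: sumr_ge0 => *; apply: f0.
have Fout : \sum_(e | outE e) f e = F.
  have := cons x xs; rewrite /netf.
  rewrite (eq_bigr (fun e => (inE e)%:R * f e - (outE e)%:R * f e)); last first.
    move=> e _; rewrite /inE /outE -mulrBl; congr (_ * _).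
    by case: (hd e == x); case: (tl e == x); rewrite /= ?subrr ?subr0 ?sub0r.
  by rewrite sumrB !sum_ind => /eqP; rewrite subr_eq0 => /eqP <-.
have fin : forall e, inE e -> f e <= F.
  by move=> e he; rewrite /F (bigD1 e) //= lerDl; apply: sumr_ge0 => *; apply: f0.
have fout : forall e, outE e -> f e <= F.
  by move=> e he; rewrite -Fout (bigD1 e) //= lerDl; apply: sumr_ge0 => *; apply: f0.
have KA : forall a : R, (F = 0 -> a = 0) ->
    \sum_o (if outE o then a * f o / F else 0) = a.
  move=> a Ha; rewrite -big_mkcond /=.
  rewrite (eq_bigr (fun o => (a / F) * f o)); last by move=> o _; rewrite mulrAC.
  rewrite -mulr_sumr Fout.
  have [Fz|Fnz] := eqVneq F 0; first by rewrite Fz (Ha Fz) !mul0r.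
  by rewrite divfK.
have KB : forall a : R, (F = 0 -> a = 0) ->
    \sum_i (if inE i then f i * a / F else 0) = a.
  move=> a Ha; rewrite -big_mkcond /=.
  rewrite (eq_bigr (fun i => f i * (a / F))); last by move=> o _; rewrite mulrA.
  rewrite -mulr_suml -/F.
  have [Fz|Fnz] := eqVneq F 0; first by rewrite Fz (Ha Fz) !(mul0r, mulr0).
  by rewrite mulrC divfK.
pose tl' (e' : (E + E * E)%type) := match e' with inl e => tl e | inr p => tl p.1 end.
pose hd' (e' : (E + E * E)%type) := match e' with inl e => hd e | inr p => hd p.2 end.
pose f' (e' : (E + E * E)%type) := match e' with
   inl e => if incx e then 0 else f e
 | inr p => if inE p.1 && outE p.2 then f p.1 * f p.2 / F else 0 end.
pose d' (e' : (E + E * E)%type) := match e' with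
   inl e => if incx e then 0 else d e
 | inr p => if inE p.1 && outE p.2 then d p.1 * f p.2 / F else 0 end.
pose lift (g : (E + E * E)%type -> R) (e : E) :=
  (inE e)%:R * \sum_o g (inr (e, o)) + (outE e)%:R * \sum_i g (inr (i, e))
  + (~~ incx e)%:R * g (inl e).
have netlift : forall g : (E + E * E)%type -> R,
    (forall e, incx e -> g (inl e) = 0) ->
    (forall i o, ~~ (inE i && outE o) -> g (inr (i, o)) = 0) ->
    forall y, netf tl' hd' g y = netf tl hd (lift g) y.
  move=> g g1 g2 y.
  pose c e := ((hd e == y)%:R - (tl e == y)%:R : R).
  have e1 : netf tl hd (lift g) y =
      \sum_e c e * ((inE e)%:R * \sum_o g (inr (e,o)))
    + \sum_e c e * ((outE e)%:R * \sum_i g (inr (i,e)))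
    + \sum_e c e * ((~~ incx e)%:R * g (inl e)).
    by rewrite /netf -!big_split /=; apply: eq_bigr => e _; rewrite /lift !mulrDr.
  rewrite e1 /netf big_sumType /= addrC.
  congr (_ + _); last first.
    apply: eq_bigr => e _; rewrite /c.
    by case h: (incx e); rewrite /= ?mul1r // g1 // !mulr0.
  rewrite (eq_bigr (fun i => \sum_o c i * ((inE i)%:R * g (inr (i, o))))); last first.
    by move=> i _; rewrite !mulr_sumr.
  rewrite [X in _ + X](eq_bigr (fun o => \sum_i c o * ((outE o)%:R * g (inr (i, o))))); last first.
    by move=> i _; rewrite !mulr_sumr.
  rewrite [X in _ + X]exchange_big /= -big_split /=.
  symmetry.
  rewrite (eq_bigr (fun i => \sum_o (c i * ((inE i)%:R * g (inr (i, o))) + c o * ((outE o)%:R * g (inr (i, o)))))); last by move=> i _; rewrite big_split.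
  rewrite pair_bigA /=; apply: eq_bigr => [[i o]] _ /=.
  case h: (inE i && outE o); last by rewrite g2 ?h ?mulr0 ?addr0.
  move/andP: h => [hi ho]; rewrite hi ho !mul1r.
  move: hi ho => /andP[/eqP hix _] /andP[/eqP tox _]; rewrite /c hix tox; ring.
have in_out : forall e, inE e -> ~~ outE e.
  by move=> e /andP[/eqP h _]; rewrite /outE h eqxx /= andbF.
have in_inc : forall e, inE e -> incx e by move=> e /andP[h _]; rewrite /incx h orbT.
have out_inc : forall e, outE e -> incx e by move=> e /andP[h _]; rewrite /incx h.
have lift_in : forall g e, inE e -> lift g e = \sum_o g (inr (e,o)).
  move=> g e hi; rewrite /lift hi (negbTE (in_out e hi)) (in_inc e hi) /=.
  by rewrite mul1r !mul0r !addr0.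
have lift_out : forall g e, outE e -> lift g e = \sum_i g (inr (i,e)).
  move=> g e ho; have hi : inE e = false.
    by apply/negbTE; apply: contraL ho => /in_out.
  by rewrite /lift hi ho (out_inc e ho) /= mul1r !mul0r add0r addr0.
have lift_no : forall g e, ~~ inE e -> ~~ outE e -> lift g e = (~~ incx e)%:R * g (inl e).
  by move=> g e hi ho; rewrite /lift (negbTE hi) (negbTE ho) !mul0r !add0r.
have liftf : forall e, tl e != hd e -> lift f' e = f e.
  move=> e ne; case hi: (inE e).
    rewrite lift_in // /f' /= hi /=; apply: KA => Fz.
    by apply/le_anti; rewrite f0 -Fz fin.
  case ho: (outE e).
    rewrite lift_out // /f' /=; rewrite (eq_bigr (fun i => if inE i then f i * f e / F else 0)); last by move=> i _; rewrite ho andbT.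
    by apply: KB => Fz; apply/le_anti; rewrite f0 -Fz fout.
  have ni : incx e = false.
    rewrite /incx; apply/negbTE/negP => /orP[/eqP t|/eqP h].
      by move: ho; rewrite /outE t eqxx /= => /negbFE /eqP h; move: ne; rewrite t h eqxx.
    by move: hi; rewrite /inE h eqxx /= => /negbFE /eqP t; move: ne; rewrite t h eqxx.
  by rewrite lift_no ?hi ?ho // /f' ni /= mul1r.
have f'0 : forall e', 0 <= f' e'.
  case=> [e|[i o]]; rewrite /f' /=; first by case: (incx e) => //; apply: f0.
  case: (_ && _) => //; apply: divr_ge0 => //; apply: mulr_ge0; apply: f0.
have cons' : forall y, y != s -> netf tl' hd' f' y = 0.
  move=> y ys; rewrite netlift; first by rewrite (netf_eq_loops _ liftf) cons.
    by move=> e hx; rewrite /f' hx.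
  by move=> i o h; rewrite /f' /= (negbTE h).
have db' : forall e', tl' e' = s -> 0 <= d' e' <= f' e'.
  case=> [e|[i o]]; rewrite /tl' /d' /f' /= => ht.
    by case: (incx e) => /=; [rewrite lexx | apply: db].
  case: (inE i && outE o) => /=; last by rewrite lexx.
  have c0 : 0 <= f o / F by apply: divr_ge0.
  rewrite -!mulrA; move: (db i ht) => /andP[h1 h2].
  by apply/andP; split; [apply: mulr_ge0 | apply: ler_wpM2r].
have stl' : forall e', f' e' != 0 -> (tl' e' == s) || (tl' e' \in A :\ x).
  case=> [e|[i o]]; rewrite /f' /tl' /=.
    case hx: (incx e); first by rewrite eqxx.
    move=> /stl /orP[->//|ht]; apply/orP; right; rewrite in_setD1 ht andbT.
    by move/norP: hx => [].
  case h: (inE i && outE o); last by rewrite eqxx.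
  move=> nz; have fi : f i != 0 by apply: contraNneq nz => ->; rewrite !mul0r.
  move/andP: h => [/andP[_ tix] _]; move/stl: fi => /orP[->//|ht].
  by apply/orP; right; rewrite in_setD1 tix ht.
have shd' : forall e', f' e' != 0 -> (hd' e' == s) || (hd' e' \in A :\ x).
  case=> [e|[i o]]; rewrite /f' /hd' /=.
    case hx: (incx e); first by rewrite eqxx.
    move=> /shd /orP[->//|ht]; apply/orP; right; rewrite in_setD1 ht andbT.
    by move/norP: hx => [].
  case h: (inE i && outE o); last by rewrite eqxx.
  move=> nz; have fo : f o != 0 by apply: contraNneq nz => ->; rewrite mulr0 mul0r.
  move/andP: h => [_ /andP[_ hox]]; move/shd: fo => /orP[->//|ht].
  by apply/orP; right; rewrite in_setD1 hox ht.
have [W' [W'b [W'd W'c]]] := IH _ tl' hd' f' d' f'0 cons' db' stl' shd'.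
have W1 : forall e, incx e -> W' (inl e) = 0.
  by move=> e hx; move: (W'b (inl e)); rewrite /f' /= hx => /andP[h1 h2]; apply/le_anti; rewrite h1 h2.
have W2 : forall i o, ~~ (inE i && outE o) -> W' (inr (i,o)) = 0.
  by move=> i o h; move: (W'b (inr (i,o))); rewrite /f' /= (negbTE h) => /andP[h1 h2]; apply/le_anti; rewrite h1 h2.
exists (lift W'); split; [|split].
- move=> e; case hi: (inE e).
    rewrite lift_in //; apply/andP; split.
      by apply: sumr_ge0 => o _; case/andP: (W'b (inr (e,o))).
    apply: (@le_trans _ _ (\sum_o f' (inr (e,o)))).
      by apply: ler_sum => o _; case/andP: (W'b (inr (e,o))).
    rewrite /f' /= hi /=; rewrite KA //.
    by move=> Fz; apply/le_anti; rewrite f0 -Fz fin.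
  case ho: (outE e).
    rewrite lift_out //; apply/andP; split.
      by apply: sumr_ge0 => o _; case/andP: (W'b (inr (o,e))).
    apply: (@le_trans _ _ (\sum_i f' (inr (i,e)))).
      by apply: ler_sum => o _; case/andP: (W'b (inr (o,e))).
    rewrite /f' /= (eq_bigr (fun i => if inE i then f i * f e / F else 0)); last by move=> i _; rewrite ho andbT.
    by rewrite KB // => Fz; apply/le_anti; rewrite f0 -Fz fout.
  rewrite lift_no ?hi ?ho //.
  case hx: (incx e) => /=; first by rewrite mul0r lexx f0.
  by rewrite mul1r; move: (W'b (inl e)); rewrite /f' hx.
- move=> e ht; have tnx : tl e != x by rewrite ht eq_sym.
  have ho : outE e = false by rewrite /outE (negbTE tnx).
  case hi: (inE e).
    rewrite lift_in //; transitivity (\sum_o d' (inr (e,o))).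
      by apply: eq_bigr => o _; apply: W'd; rewrite /tl'.
    rewrite /d' /= hi /=; apply: KA => Fz.
    move: (db e ht) (fin e hi) => /andP[h1 h2] h3.
    by apply/le_anti; rewrite h1 andbT -Fz; exact: le_trans h2 h3.
  case hh: (hd e == x); first by move: hi; rewrite /inE hh tnx.
  have ni : incx e = false by rewrite /incx (negbTE tnx) hh.
  rewrite lift_no ?hi ?ho // ni /= mul1r W'd; last by rewrite /tl'.
  by rewrite /d' ni.
- by move=> y ys; rewrite -netlift //; exact: W'c.
Qed.

Lemma circ_pos (R : realFieldType) (n : nat) : forall (N E : finType) (s : N) (tl hd : E -> N)
  (f d : E -> R) (A : {set N}),
  (#|A| <= n)%N ->
  (forall e, 0 <= f e) ->
  (forall y, y != s -> netf tl hd f y = 0) ->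
  (forall e, tl e = s -> 0 <= d e <= f e) ->
  (forall e, f e != 0 -> (tl e == s) || (tl e \in A)) ->
  (forall e, f e != 0 -> (hd e == s) || (hd e \in A)) ->
  exists W : E -> R, (forall e, 0 <= W e <= f e) /\ (forall e, tl e = s -> W e = d e) /\
        (forall y, y != s -> netf tl hd W y = 0).
Proof.
elim: n => [|n IH] N E s tl hd f d A hA f0 cons db stl shd.
  move: hA; rewrite leqn0 cards_eq0 => /eqP A0.
  apply: circ_base => // e nz.
  by move: (stl e nz) (shd e nz); rewrite A0 !inE !orbF => -> ->.
case: (set_0Vmem A) => [A0|[x xA]].
  apply: circ_base => // e nz.
  by move: (stl e nz) (shd e nz); rewrite A0 !inE !orbF => -> ->.
have hA' : (#|A :\ x| <= n)%N by move: hA; rewrite (cardsD1 x A) xA.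
case: (eqVneq x s) => [xs|xs].
  apply: (IH N E s tl hd f d (A :\ x)) => // e nz.
    case/orP: (stl e nz) => [->//|h]; apply/orP.
    case: (eqVneq (tl e) s) => [->|ne]; [by left|right].
    by rewrite in_setD1 h xs ne.
  case/orP: (shd e nz) => [->//|h]; apply/orP.
  case: (eqVneq (hd e) s) => [->|ne]; [by left|right].
  by rewrite in_setD1 h xs ne.
apply: (circ_step xs f0 cons db stl shd) => E' tl' hd' f' d' *.
by apply: (IH N E' s tl' hd' f' d' (A :\ x)).
Qed.

Lemma netf_orient (R : realFieldType) (N E : finType) (tl hd : E -> N) (pos : pred E) (g : E -> R) y :
  netf (fun e => if pos e then tl e else hd e) (fun e => if pos e then hd e else tl e)
       (fun e => if pos e then g e else - g e) y = netf tl hd g y.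
Proof.
apply: eq_bigr => e _; case: (pos e) => //; ring.
Qed.

Lemma circ (R : realFieldType) (N E : finType) (s : N) (tl hd : E -> N) (f d : E -> R) :
  (forall y, y != s -> netf tl hd f y = 0) ->
  (forall e, tl e = s -> 0 <= d e <= f e) ->
  exists W : E -> R, (forall e, (0 <= W e <= f e) \/ (f e <= W e <= 0)) /\
     (forall e, tl e = s -> W e = d e) /\ (forall y, y != s -> netf tl hd W y = 0).
Proof.
move=> cons db.
pose pos e := 0 <= f e.
pose tl2 e := if pos e then tl e else hd e.
pose hd2 e := if pos e then hd e else tl e.
pose f2 e := if pos e then f e else - f e.
pose d2 e := if pos e then d e else 0.
have f20 : forall e, 0 <= f2 e.
  move=> e; rewrite /f2; case h: (pos e) => //.
  by rewrite oppr_ge0; apply: ltW; rewrite ltNge; exact: negbT h.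
have cons2 : forall y, y != s -> netf tl2 hd2 f2 y = 0.
  by move=> y ys; rewrite /tl2 /hd2 /f2 netf_orient cons.
have db2 : forall e, tl2 e = s -> 0 <= d2 e <= f2 e.
  move=> e; rewrite /tl2 /d2 /f2; case h: (pos e) => ht; first exact: db.
  by rewrite lexx /=; move: (f20 e); rewrite /f2 h.
have sA : forall e, f2 e != 0 -> (tl2 e == s) || (tl2 e \in [set: N]) by move=> e _; rewrite in_setT orbT.
have sB : forall e, f2 e != 0 -> (hd2 e == s) || (hd2 e \in [set: N]) by move=> e _; rewrite in_setT orbT.
have [W2 [W2b [W2d W2c]]] := @circ_pos R #|[set: N]| N E s tl2 hd2 f2 d2 [set: N]
   (leqnn _) f20 cons2 db2 sA sB.
exists (fun e => if pos e then W2 e else - W2 e); split; [|split].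
- move=> e; case h: (pos e); move: (W2b e); rewrite /f2 h => /andP[a b].
    by left; rewrite a b.
  by right; apply/andP; split; lra.
- move=> e ht; have p : pos e by case/andP: (db e ht) => a b; exact: le_trans a b.
  by rewrite p W2d /d2 ?p // /tl2 p.
- move=> y ys; rewrite -(netf_orient tl hd pos _ y) -(W2c y ys).
  by apply: eq_bigr => e _; rewrite /hd2 /tl2; case: (pos e); rewrite ?opprK.
Qed.

Definition tgt (R : realFieldType) (V : finType) (T : nat) (D : EVdata R V) (v : V) (j : 'I_T)
  : option ('I_T + (V + V)) :=
  if (t_arr D v <= j.+1)%N && (j.+1 < t_dep D v)%N then Some (inr (inl v))
  else if (j.+1 == t_dep D v) && (j.+1 < T)%N then Some (inr (inr v)) else None.

Definition tlN (V : finType) (T : nat) (e : ((V * 'I_T) + ('I_T + (V + V)))%type)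
  : option ('I_T + (V + V)) :=
  match e with
  | inl p => Some (inl p.2)
  | inr (inl _) => None
  | inr (inr (inl v)) => Some (inr (inl v))
  | inr (inr (inr v)) => Some (inr (inr v))
  end.

Definition hdN (R : realFieldType) (V : finType) (T : nat) (D : EVdata R V)
  (e : ((V * 'I_T) + ('I_T + (V + V)))%type) : option ('I_T + (V + V)) :=
  match e with
  | inl p => tgt D p.1 p.2
  | inr (inl i) => Some (inl i)
  | inr (inr (inl v)) => Some (inr (inr v))
  | inr (inr (inr v)) => None
  end.

Lemma tgt_t (R : realFieldType) (V : finType) (T : nat) (D : EVdata R V) v (j i : 'I_T) :
  (tgt D v j == Some (inl i)) = false.
Proof. by rewrite /tgt; case: ifP => _ //; case: ifP. Qed.

Lemma tgt_a (R : realFieldType) (V : finType) (T : nat) (D : EVdata R V) v (j : 'I_T) w :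
  (tgt D v j == Some (inr (inl w))) = (w == v) && (t_arr D v <= j.+1)%N && (j.+1 < t_dep D v)%N.
Proof.
rewrite /tgt; case: ifP => h1.
  by rewrite -[LHS]/(v == w) eq_sym; move: h1 => /andP[-> ->]; rewrite !andbT.
by rewrite -andbA h1 andbF; case: ifP.
Qed.

Lemma tgt_b (R : realFieldType) (V : finType) (T : nat) (D : EVdata R V) v (j : 'I_T) w :
  (tgt D v j == Some (inr (inr w))) = (w == v) && ~~ ((t_arr D v <= j.+1)%N && (j.+1 < t_dep D v)%N)
     && (j.+1 == t_dep D v) && (j.+1 < T)%N.
Proof.
rewrite /tgt; case: ifP => h1 /=; first by rewrite andbF.
case: ifP => h2; last by rewrite -andbA h2 andbF.
by rewrite -[LHS]/(v == w) eq_sym; move: h2 => /andP[-> ->]; rewrite !andbT.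
Qed.

Lemma sum_pair (R : realFieldType) (V I : finType) (F : V * I -> R) :
  \sum_p F p = \sum_v \sum_j F (v, j).
Proof. by rewrite [RHS]pair_bigA; apply: eq_bigr; case. Qed.

Lemma net_time (R : realFieldType) (V : finType) (T : nat) (D : EVdata R V)
  (g : ((V * 'I_T) + ('I_T + (V + V)))%type -> R) (i : 'I_T) :
  netf (@tlN V T) (hdN D) g (Some (inl i)) = g (inr (inl i)) - \sum_v g (inl (v, i)).
Proof.
rewrite /netf !big_sumType /= sum_pair.
rewrite (eq_bigr (fun v => - g (inl (v,i)))); last first.
  move=> v _ /=.
  rewrite (eq_bigr (fun j : 'I_T => - ((Some (@inl _ (V + V) j) == Some (inl i))%:R * g (inl (v, j))))); last by move=> j _; rewrite tgt_t sub0r mulNr.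
  by rewrite sumrN sum_ind (big_pred1 i).
rewrite (eq_bigr (fun j : 'I_T => (Some (@inl _ (V + V) j) == Some (inl i))%:R * g (inr (inl j)))); last by move=> j _; rewrite subr0.
rewrite sum_ind (big_pred1 i) //.
have z : forall (F : V -> R), \sum_v (0 - 0) * F v = 0 by move=> F; apply: big1 => *; rewrite subr0 mul0r.
by rewrite !z !addr0 sumrN addrC.
Qed.

Lemma net_a (R : realFieldType) (V : finType) (T : nat) (D : EVdata R V)
  (g : ((V * 'I_T) + ('I_T + (V + V)))%type -> R) (w : V) :
  netf (@tlN V T) (hdN D) g (Some (inr (inl w))) =
  \sum_(j : 'I_T | (t_arr D w <= j.+1)%N && (j.+1 < t_dep D w)%N) g (inl (w, j)) - g (inr (inr (inl w))).
Proof.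
rewrite /netf !big_sumType /= sum_pair.
have z1 : forall (I : finType) (F : I -> R), \sum_i (0 - 0) * F i = 0.
  by move=> I F; apply: big1 => *; rewrite subr0 mul0r.
rewrite !z1 add0r addr0.
rewrite [X in X + _](bigD1 w) //= [X in _ + X + _]big1 ?addr0; last first.
  move=> v vw; apply: big1 => j _ /=.
  have -> : (tgt D v j == Some (inr (inl w))) = false by rewrite tgt_a -[w == v]/(w == v) eq_sym (negbTE vw).
  by rewrite subr0 mul0r.
rewrite (eq_bigr (fun j : 'I_T => ((t_arr D w <= j.+1)%N && (j.+1 < t_dep D w)%N)%:R * g (inl (w, j)))); last by move=> j _ /=; rewrite tgt_a eqxx subr0.
rewrite sum_ind.
rewrite [X in _ + X](eq_bigr (fun i => - (((Some (inr (inl i)) : option ('I_T + (V + V))) == Some (inr (inl w)))%:R * g (inr (inr (inl i)))))); last by move=> i _; rewrite sub0r mulNr.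
by rewrite sumrN sum_ind (big_pred1 w).
Qed.
Lemma net_b (R : realFieldType) (V : finType) (T : nat) (D : EVdata R V)
  (g : ((V * 'I_T) + ('I_T + (V + V)))%type -> R) (w : V) :
  netf (@tlN V T) (hdN D) g (Some (inr (inr w))) =
  g (inr (inr (inl w))) + \sum_(j : 'I_T | ~~ ((t_arr D w <= j.+1)%N && (j.+1 < t_dep D w)%N) && (j.+1 == t_dep D w) && (j.+1 < T)%N) g (inl (w, j)) - g (inr (inr (inr w))).
Proof.
rewrite /netf !big_sumType /= sum_pair.
have z1 : forall (I : finType) (F : I -> R), \sum_i (0 - 0) * F i = 0.
  by move=> I F; apply: big1 => *; rewrite subr0 mul0r.
rewrite !z1 add0r.
rewrite [X in X + _](bigD1 w) //= [X in _ + X + _ = _]big1 ?addr0; last first.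
  move=> v vw; apply: big1 => j _ /=.
  have -> : (tgt D v j == Some (inr (inr w))) = false by rewrite tgt_b -[w == v]/(w == v) eq_sym (negbTE vw).
  by rewrite subr0 mul0r.
rewrite (eq_bigr (fun j : 'I_T => (~~ ((t_arr D w <= j.+1)%N && (j.+1 < t_dep D w)%N) && (j.+1 == t_dep D w) && (j.+1 < T)%N)%:R * g (inl (w, j)))); last by move=> j _ /=; rewrite tgt_b eqxx subr0.
rewrite sum_ind.
rewrite [X in _ + (X + _)](eq_bigr (fun i => (((Some (inr (inr i)) : option ('I_T + (V + V))) == Some (inr (inr w)))%:R * g (inr (inr (inl i)))))); last by move=> i _; rewrite subr0.
rewrite [X in _ + (_ + X)](eq_bigr (fun i => - (((Some (inr (inr i)) : option ('I_T + (V + V))) == Some (inr (inr w)))%:R * g (inr (inr (inr i)))))); last by move=> i _; rewrite sub0r mulNr.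
rewrite sumrN !sum_ind !(big_pred1 w) //.
by rewrite addrA [X in X - _]addrC.
Qed.

Definition Ssum (R : realFieldType) (T ta t : nat) (q : nat -> R) : R :=
  \sum_(j < T) ((j.+1 < t)%N%:R - (j.+1 < ta)%N%:R) * q j.+1.

Lemma S_step (R : realFieldType) (T ta t : nat) (q : nat -> R) :
  (1 <= t <= T)%N -> Ssum T ta t.+1 q = Ssum T ta t q + q t.
Proof.
move=> /andP[t1 tT]; have jT : (t.-1 < T)%N by rewrite prednK.
transitivity (Ssum T ta t q + \sum_(j < T) (j.+1 == t)%:R * q j.+1).
  rewrite /Ssum -big_split; apply: eq_bigr => j _ /=.
  rewrite ltnS leq_eqVlt; case h: (j.+1 == t) => /=.
    by rewrite (eqP h) ltnn /=; ring.
  by ring.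
congr (_ + _); rewrite (sum_ind (fun j : 'I_T => j.+1 == t) (fun j => q j.+1)).
rewrite (big_pred1 (Ordinal jT)) /= ?prednK // => j /=.
by rewrite -[in LHS](prednK t1) eqSS.
Qed.

Lemma S_zero (R : realFieldType) (T ta : nat) (q : nat -> R) : Ssum T ta ta q = 0.
Proof. by apply: big1 => j _; rewrite subrr mul0r. Qed.


Lemma S_ge0 (R : realFieldType) (T ta td t : nat) (q : nat -> R) :
  (forall j : 'I_T, ~~ ((ta <= j.+1) && (j.+1 <= td))%N -> q j.+1 = 0) ->
  (forall j : 'I_T, 0 <= q j.+1) -> 0 <= Ssum T ta t q.
Proof.
move=> H0 Hp; apply: sumr_ge0 => j _.
case h: (j.+1 < ta)%N; first by rewrite H0 ?mulr0 // (leqNgt ta) h.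
by rewrite subr0; apply: mulr_ge0.
Qed.

Lemma S_leT (R : realFieldType) (T ta td t : nat) (q : nat -> R) :
  (forall j : 'I_T, ~~ ((ta <= j.+1) && (j.+1 <= td))%N -> q j.+1 = 0) ->
  (forall j : 'I_T, 0 <= q j.+1) -> (t <= T)%N -> Ssum T ta t q <= Ssum T ta T q.
Proof.
move=> H0 Hp tT; apply: ler_sum => j _.
case h: (j.+1 < ta)%N; first by rewrite H0 ?mulr0 // (leqNgt ta) h.
rewrite !subr0; apply: ler_wpM2r => //; rewrite ler_nat.
by case h2: (j.+1 < t)%N => //=; rewrite (leq_trans h2 tT).
Qed.

Lemma S_td (R : realFieldType) (T ta td : nat) (q : nat -> R) :
  (forall j : 'I_T, ~~ ((ta <= j.+1) && (j.+1 <= td))%N -> q j.+1 = 0) ->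
  Ssum T ta td q = \sum_(j : 'I_T | (ta <= j.+1)%N && (j.+1 < td)%N) q j.+1.
Proof.
move=> H0; rewrite -sum_ind; apply: eq_bigr => j _.
case h: (j.+1 < ta)%N; first by rewrite H0 ?mulr0 // (leqNgt ta) h.
by rewrite subr0 (leqNgt ta) h.
Qed.

Lemma S_T (R : realFieldType) (T ta td : nat) (q : nat -> R) :
  (td <= T)%N ->
  (forall j : 'I_T, ~~ ((ta <= j.+1) && (j.+1 <= td))%N -> q j.+1 = 0) ->
  Ssum T ta T q = \sum_(j : 'I_T | (ta <= j.+1)%N && (j.+1 < td)%N) q j.+1
     + \sum_(j : 'I_T | ~~ ((ta <= j.+1)%N && (j.+1 < td)%N) && (j.+1 == td) && (j.+1 < T)%N) q j.+1.
Proof.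
move=> tdT H0; rewrite -[X in _ = X + _]sum_ind -[X in _ = _ + X]sum_ind -big_split; apply: eq_bigr => j _ /=.
case h: (j.+1 < ta)%N; first by rewrite H0 ?mulr0 ?addr0 // (leqNgt ta) h.
have h1 : (ta <= j.+1)%N by rewrite (leqNgt ta) h.
rewrite subr0 h1 /=.
case h2: (j.+1 < td)%N => /=.
  have -> : (j.+1 < T)%N by apply: leq_trans h2 tdT.
  by rewrite mul0r addr0.
case h3: (j.+1 == td) => /=; first by rewrite mul0r add0r.
rewrite H0 ?mulr0 ?addr0 //.
by rewrite h1 /= leq_eqVlt h3 h2.
Qed.

Lemma E_traj (R : realFieldType) (T ta : nat) (q e : nat -> R) (ea k : R) :
  (1 <= ta <= T)%N ->
  (forall t, (1 <= t)%N -> (t < T)%N -> e t.+1 = e t + k * q t) ->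
  e ta = ea ->
  forall t, (1 <= t <= T)%N -> e t = ea + k * Ssum T ta t q.
Proof.
move=> /andP[ta1 taT] dyn eta.
have G : forall n, (n.+1 <= T)%N -> e n.+1 - k * Ssum T ta n.+1 q = e 1 - k * Ssum T ta 1 q.
  elim=> [//|n IH] hn.
  rewrite dyn // S_step; last by rewrite /= ltnW.
  rewrite -IH; last exact: ltnW.
  ring.
move=> t /andP[t1 tT].
have := G t.-1; rewrite prednK // => /(_ tT) Gt.
have := G ta.-1; rewrite prednK // => /(_ taT); rewrite eta S_zero mulr0 subr0 => Ga.
by rewrite -Ga in Gt; rewrite -Gt; ring.
Qed.

Unset Implicit Arguments. Set Strict Implicit.

Theorem proposition1 (R : realFieldType) (V : finType) (T : nat)
    (D : EVdata R V) (eta_c dt : R) (phat pcheck : nat -> R) :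
  EVdata_ok T D eta_c dt ->
  in_Fc T D eta_c dt phat pcheck ->
  forall p : nat -> R,
    (forall t, (1 <= t <= T)%N -> pcheck t <= p t /\ p t <= phat t) ->
    exists (pc e : V -> nat -> R), disagg_feasible T D eta_c dt p pc e.
Proof.
move=> [eta0 [dt0 [pm0 [emm win]]]] [[hpc [he Hh]] [[cpc [ce Hc]] hle]] p hp.
case: Hh => [Hh1 [Hh2 [Hh3 [Hh4 [Hh5 [Hh6 Hh7]]]]]].
case: Hc => [Hc1 [Hc2 [Hc3 [Hc4 [Hc5 [Hc6 Hc7]]]]]].
pose A v (j : 'I_T) := (t_arr D v <= j.+1)%N && (j.+1 < t_dep D v)%N.
pose B v (j : 'I_T) := ~~ ((t_arr D v <= j.+1)%N && (j.+1 < t_dep D v)%N) && (j.+1 == t_dep D v) && (j.+1 < T)%N.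
pose f (e : ((V * 'I_T) + ('I_T + (V + V)))%type) : R :=
  match e with
  | inl pr => hpc pr.1 pr.2.+1 - cpc pr.1 pr.2.+1
  | inr (inl i) => \sum_v (hpc v i.+1 - cpc v i.+1)
  | inr (inr (inl v)) => \sum_(j | A v j) (hpc v j.+1 - cpc v j.+1)
  | inr (inr (inr v)) => \sum_(j | A v j) (hpc v j.+1 - cpc v j.+1) + \sum_(j | B v j) (hpc v j.+1 - cpc v j.+1)
  end.
pose dd (e : ((V * 'I_T) + ('I_T + (V + V)))%type) : R :=
  match e with inr (inl i) => p i.+1 - pcheck i.+1 | _ => 0 end.
have cons : forall y, y != None -> netf (@tlN V T) (hdN D) f y = 0.
  case=> [[i|[w|w]]|] // _.
  - by rewrite net_time /= subrr.
  - by rewrite net_a /= subrr.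
  - by rewrite net_b /= subrr.
have iT : forall i : 'I_T, (1 <= i.+1 <= T)%N by move=> i; rewrite /= ltn_ord.
have db : forall e, @tlN V T e = None -> 0 <= dd e <= f e.
  case=> [[v i]|[i|[w|w]]] //= _.
  rewrite sumrB -Hh1 // -Hc1 //; have := hp i.+1 (iT i).
  by move=> [h1 h2]; apply/andP; split; lra.
have [W [Wc [Wd Wn]]] := circ cons db.
pose pc v t := cpc v t + \sum_(j : 'I_T | j.+1 == t) W (inl (v, j)).
have pcE : forall v (j : 'I_T), pc v j.+1 = cpc v j.+1 + W (inl (v, j)).
  by move=> v j; rewrite /pc (big_pred1 j).
pose e v t := e_arr D v + eta_c * dt * Ssum T (t_arr D v) t (pc v).
have ordt : forall t, (1 <= t <= T)%N -> exists j : 'I_T, t = j.+1.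
  move=> t /andP[t1 tT]; have jT : (t.-1 < T)%N by rewrite prednK.
  by exists (Ordinal jT); rewrite /= prednK.
have k0 : 0 < eta_c * dt by apply: mulr_gt0.
have Wz : forall v (j : 'I_T), f (inl (v,j)) = 0 -> W (inl (v,j)) = 0.
  by move=> v j h; case: (Wc (inl (v,j))); rewrite h => /andP[a b]; apply/le_anti; rewrite a b.
have offz : forall v (j : 'I_T), ~~ ((t_arr D v <= j.+1) && (j.+1 <= t_dep D v))%N ->
    pc v j.+1 = 0 /\ cpc v j.+1 = 0 /\ hpc v j.+1 = 0.
  move=> v j nw; have c0 := Hc7 v j.+1 (iT j) nw; have h0 := Hh7 v j.+1 (iT j) nw.
  by rewrite pcE c0 Wz ?addr0 //= c0 h0 subrr.
have winb : forall v (j : 'I_T), ((t_arr D v <= j.+1) && (j.+1 <= t_dep D v))%N ->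
    0 <= pc v j.+1 <= p_max D v.
  move=> v j w; have [c1 c2] := Hc2 v j.+1 (iT j) w; have [h1 h2] := Hh2 v j.+1 (iT j) w.
  by rewrite pcE; case: (Wc (inl (v,j))) => /= /andP[a b]; apply/andP; split; lra.
have posw : forall v (j : 'I_T), 0 <= pc v j.+1 /\ 0 <= cpc v j.+1 /\ 0 <= hpc v j.+1.
  move=> v j; case w: ((t_arr D v <= j.+1) && (j.+1 <= t_dep D v))%N.
    have [c1 c2] := Hc2 v j.+1 (iT j) w; have [h1 h2] := Hh2 v j.+1 (iT j) w.
    by case/andP: (winb v j w).
  by have := offz v j; rewrite w => /(_ isT) [-> [-> ->]]; rewrite lexx.
have ceE : forall v t, (1 <= t <= T)%N -> ce v t = e_arr D v + eta_c * dt * Ssum T (t_arr D v) t (cpc v).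
  move=> v; have [ta1 [tatd tdT]] := win v; apply: E_traj.
  - by rewrite ta1 (leq_trans tatd tdT).
  - by move=> t t1 tT; rewrite Hc3 //; ring.
  - exact: Hc4.
have heE : forall v t, (1 <= t <= T)%N -> he v t = e_arr D v + eta_c * dt * Ssum T (t_arr D v) t (hpc v).
  move=> v; have [ta1 [tatd tdT]] := win v; apply: E_traj.
  - by rewrite ta1 (leq_trans tatd tdT).
  - by move=> t t1 tT; rewrite Hh3 //; ring.
  - exact: Hh4.
have Wab : forall v, \sum_(j | A v j) W (inl (v,j)) = W (inr (inr (inl v))).
  by move=> v; have := Wn (Some (inr (inl v))) isT; rewrite net_a => /eqP; rewrite subr_eq0 => /eqP.
have Wbs : forall v, \sum_(j | A v j) W (inl (v,j)) + \sum_(j | B v j) W (inl (v,j)) = W (inr (inr (inr v))).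
  move=> v; have := Wn (Some (inr (inr v))) isT; rewrite net_b -Wab => /eqP; rewrite subr_eq0 => /eqP.
  done.
exists pc, e; split; [|split; [|split; [|split; [|split; [|split]]]]].
- move=> t /ordt [j ->].
  rewrite (eq_bigr (fun v => cpc v j.+1 + W (inl (v,j)))); last by move=> v _; rewrite pcE.
  rewrite big_split /= -Hc1 //.
  have := Wn (Some (inl j)) isT; rewrite net_time => /eqP; rewrite subr_eq0 => /eqP <-.
  rewrite Wd //=; ring.
- move=> v t /ordt [j ->] w; have := winb v j w; by case/andP.
- move=> v t t1 tT; rewrite /e S_step; last by rewrite t1 ltnW.
  ring.
- by move=> v; rewrite /e S_zero mulr0 addr0.
- move=> v; have [ta1 [tatd tdT]] := win v.
  have SA : forall q : nat -> R, (forall j : 'I_T, ~~ ((t_arr D v <= j.+1) && (j.+1 <= t_dep D v))%N -> q j.+1 = 0) ->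
      Ssum T (t_arr D v) (t_dep D v) q = \sum_(j | A v j) q j.+1.
    by move=> q hq; rewrite (S_td hq).
  have tdr : (1 <= t_dep D v <= T)%N by rewrite (leq_trans ta1 tatd) tdT.
  have Ep : e v (t_dep D v) = e_arr D v + eta_c * dt * (\sum_(j | A v j) cpc v j.+1) + eta_c * dt * W (inr (inr (inl v))).
    rewrite /e SA; last by move=> j /(offz v j) [->].
    rewrite (eq_bigr (fun j : 'I_T => cpc v j.+1 + W (inl (v,j)))); last by move=> j _; rewrite pcE.
    by rewrite big_split /= Wab; ring.
  have Ec : ce v (t_dep D v) = e_arr D v + eta_c * dt * (\sum_(j | A v j) cpc v j.+1).
    by rewrite ceE // SA // => j /(offz v j) [_ [->]].
  have Eh : he v (t_dep D v) = e_arr D v + eta_c * dt * (\sum_(j | A v j) hpc v j.+1).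
    by rewrite heE // SA // => j /(offz v j) [_ [_ ->]].
  have fab : f (inr (inr (inl v))) = \sum_(j | A v j) hpc v j.+1 - \sum_(j | A v j) cpc v j.+1 by rewrite /= sumrB.
  move: (Hc5 v) (Hh5 v); rewrite Ec Eh => d1 d2.
  rewrite Ep; case: (Wc (inr (inr (inl v)))); rewrite fab => /andP[a b].
    by have := mulr_ge0 (ltW k0) a; lra.
  have : 0 <= eta_c * dt * (W (inr (inr (inl v))) - (\sum_(j | A v j) hpc v j.+1 - \sum_(j | A v j) cpc v j.+1)).
    by apply: mulr_ge0; [exact: ltW | lra].
  by rewrite !mulrBr; lra.
- move=> v t tr; have [ta1 [tatd tdT]] := win v.
  have /andP[t1 tT] := tr.
  have taT : (1 <= t_arr D v <= T)%N by rewrite ta1 (leq_trans tatd tdT).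
  have T1 : (1 <= T <= T)%N by rewrite leqnn (leq_trans ta1 (leq_trans tatd tdT)).
  have ST : forall q : nat -> R, (forall j : 'I_T, ~~ ((t_arr D v <= j.+1) && (j.+1 <= t_dep D v))%N -> q j.+1 = 0) ->
      Ssum T (t_arr D v) T q = \sum_(j | A v j) q j.+1 + \sum_(j | B v j) q j.+1.
    by move=> q hq; rewrite (S_T tdT hq).
  have hw : forall j : 'I_T, ~~ ((t_arr D v <= j.+1) && (j.+1 <= t_dep D v))%N -> pc v j.+1 = 0.
    by move=> j /(offz v j) [->].
  have hpos : forall j : 'I_T, 0 <= pc v j.+1 by move=> j; case: (posw v j).
  have Ep : Ssum T (t_arr D v) T (pc v) = (\sum_(j | A v j) cpc v j.+1 + \sum_(j | B v j) cpc v j.+1) + W (inr (inr (inr v))).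
    rewrite ST //.
    rewrite [X in X + _ = _](eq_bigr (fun j : 'I_T => cpc v j.+1 + W (inl (v,j)))); last by move=> j _; rewrite pcE.
    rewrite [X in _ + X = _](eq_bigr (fun j : 'I_T => cpc v j.+1 + W (inl (v,j)))); last by move=> j _; rewrite pcE.
    by rewrite !big_split /= -Wbs; ring.
  have Ec : ce v T = e_arr D v + eta_c * dt * (\sum_(j | A v j) cpc v j.+1 + \sum_(j | B v j) cpc v j.+1).
    by rewrite ceE // ST // => j /(offz v j) [_ [->]].
  have Eh : he v T = e_arr D v + eta_c * dt * (\sum_(j | A v j) hpc v j.+1 + \sum_(j | B v j) hpc v j.+1).
    by rewrite heE // ST // => j /(offz v j) [_ [_ ->]].
  have fbs : f (inr (inr (inr v))) = (\sum_(j | A v j) hpc v j.+1 + \sum_(j | B v j) hpc v j.+1)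
      - (\sum_(j | A v j) cpc v j.+1 + \sum_(j | B v j) cpc v j.+1).
    by rewrite /= !sumrB; ring.
  have S0 : 0 <= Ssum T (t_arr D v) t (pc v) := S_ge0 t hw hpos.
  have S1 : Ssum T (t_arr D v) t (pc v) <= Ssum T (t_arr D v) T (pc v) := S_leT hw hpos tT.
  have emin : e_min D v <= e_arr D v by have := Hc6 v _ taT; rewrite Hc4 => -[].
  have [_ cmax] := Hc6 v T T1; have [_ hmax] := Hh6 v T T1.
  rewrite Ec in cmax; rewrite Eh in hmax.
  have k1 := ler_wpM2l (ltW k0) S1; rewrite Ep in k1.
  rewrite /e; split; first by have := mulr_ge0 (ltW k0) S0; lra.
  case: (Wc (inr (inr (inr v)))); rewrite fbs => /andP[a b].
    have : 0 <= eta_c * dt * ((\sum_(j | A v j) hpc v j.+1 + \sum_(j | B v j) hpc v j.+1)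
      - (\sum_(j | A v j) cpc v j.+1 + \sum_(j | B v j) cpc v j.+1) - W (inr (inr (inr v)))).
      by apply: mulr_ge0; [exact: ltW | lra].
    by rewrite !mulrBr !mulrDr in k1 *; lra.
  have : 0 <= eta_c * dt * (- W (inr (inr (inr v)))).
    by apply: mulr_ge0; [exact: ltW | lra].
  by rewrite mulrN !mulrDr in k1 *; lra.
- move=> v t /ordt [j ->] nw; exact: (offz v j nw).1.
Qed.
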